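(* Fix a constant $r$. There is a constant $c_r$ such that for every unweighted $K_r$-minor-free graph $G$ and every BFS forest $F\subseteq G$, there is a root expansion of $F$ of size at most $c_r$.
   Context: $G$ is unweighted (edge lengths 1); $K_r$-minor-free means $G$ has no $K_r$ minor. For $S\subseteq V(G)$, $G[S]$ is the induced subgraph. A tree $T\subseteq G$ rooted at $r$ is a BFS tree if $\mathrm{dist}_T(r,v)=\mathrm{dist}_{G[V(T)]}(r,v)$ for all $v\in V(T)$. A BFS forest is a subgraph of $G$ that is a disjoint union of vertex-disjoint BFS trees. A BFS tree $T$ with root $r$ preserves a path $\pi$ in $G$ if every vertex of $\pi$ is in $V(T)$ and $\pi$ passes through $r$; a set of BFS trees (or forests) preserves $\pi$ if one of its trees preserves $\pi$. The prefix of a path $\pi$ is the path consisting of all but the last edge of $\pi$. A root expansion of a BFS tree $T$ is a set $\mathcal{T}$ of BFS trees such that every path $\pi$ in $G$ whose prefix is preserved by $T$ is preserved by $\mathcal{T}$. A root expansion of a BFS forest $F$ is a set $\mathcal{F}$ of BFS forests (each consisting of vertex-disjoint BFS trees; trees in different forests may share vertices) such that the set of all trees appearing in forests of $\mathcal{F}$ is a root expansion of each tree of $F$. The size of the root expansion is $|\mathcal{F}|$. *)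

(* Defs.v *)
(* finite simple graphs as symmetric irreflexive relations on a finType. *)
From Stdlib Require List.
From mathcomp Require Import all_boot.
Set Implicit Arguments. Unset Strict Implicit. Unset Printing Implicit Defensive.

Section Graphs.
Variable T : finType.

Definition induced (e : rel T) (S : {set T}) : rel T :=
  [rel x y | [&& e x y, x \in S & y \in S]].

Definition has_K_minor (e : rel T) (r : nat) : Prop :=
  exists B : 'I_r -> {set T},
    [/\ (forall i, B i != set0),
        (forall i x y, x \in B i -> y \in B i -> connect (induced e (B i)) x y),
        (forall i j, i != j -> [disjoint B i & B j]) &
        (forall i j, i != j -> exists x y, [/\ x \in B i, y \in B j & e x y])].

Fixpoint nwalk (E : rel T) (n : nat) (x y : T) : bool :=
  match n with
  | 0 => x == y
  | n'.+1 => [exists z, E x z && nwalk E n' z y]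
  end.

(* (unweighted) distance: least n with an n-edge walk; #|T| if unreachable *)
Definition dist (E : rel T) (x y : T) : nat :=
  find (fun n => nwalk E n x y) (iota 0 #|T|).

Record rtree := RTree { tV : {set T}; tE : rel T; troot : T }.

Definition is_tree (e : rel T) (t : rtree) : Prop :=
  [/\ (forall x y, tE t x y -> [&& e x y, x \in tV t & y \in tV t]),
      (forall x y, tE t x y = tE t y x),
      troot t \in tV t,
      (forall x y, x \in tV t -> y \in tV t -> connect (tE t) x y) &
      (forall c : seq T, uniq c -> 2 < size c -> ~~ cycle (tE t) c)].

Definition is_bfs_tree (e : rel T) (t : rtree) : Prop :=
  is_tree e t /\
  forall v, v \in tV t ->
    dist (tE t) (troot t) v = dist (induced e (tV t)) (troot t) v.

Definition is_bfs_forest (e : rel T) (F : seq rtree) : Prop :=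
  (forall t, List.In t F -> is_bfs_tree e t) /\
  pairwise (fun t1 t2 => [disjoint tV t1 & tV t2]) F.

Definition gpath (e : rel T) (p : seq T) : bool :=
  if p is x :: q then path e x q && uniq p else false.

(* prefix: all but the last edge (drop the last vertex) *)
Definition prefix (p : seq T) : seq T :=
  if p is x :: q then belast x q else [::].

Definition preserves (t : rtree) (p : seq T) : bool :=
  all (fun v => v \in tV t) p && (troot t \in p).

Definition preserved_by (ts : seq rtree) (p : seq T) : Prop :=
  exists t, List.In t ts /\ preserves t p.

Definition root_expansion_tree (e : rel T) (t : rtree) (ts : seq rtree) : Prop :=
  (forall t', List.In t' ts -> is_bfs_tree e t') /\
  forall p, gpath e p -> preserves t (prefix p) -> preserved_by ts p.

Definition root_expansion_forest (e : rel T) (F : seq rtree) (FF : seq (seq rtree)) : Prop :=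
  (forall F', List.In F' FF -> is_bfs_forest e F') /\
  forall t, List.In t F -> root_expansion_tree e t (flatten FF).

End Graphs.

(* Main.v *)
Require Import Defs.
From mathcomp Require Import all_boot.
From mathcomp Require Import zify.
Set Implicit Arguments. Unset Strict Implicit. Unset Printing Implicit Defensive.


Section Walks.
Variable T : finType.
Implicit Types (E : rel T) (x y z : T).

Lemma nwalk_snoc E n x y z : nwalk E n x y -> E y z -> nwalk E n.+1 x z.
Proof.
elim: n x => [|n IH] x /=.
  by move=> /eqP -> Eyz; apply/existsP; exists z; rewrite Eyz eqxx.
move=> /existsP[w /andP[Exw Hw]] Eyz; apply/existsP; exists w.
by rewrite Exw; apply: IH Hw Eyz.
Qed.

Lemma nwalk_sym E n x y : symmetric E -> nwalk E n x y -> nwalk E n y x.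
Proof.
move=> sE; elim: n x y => [|n IH] x y /=; first by rewrite eq_sym.
move=> /existsP[w /andP[Exw Hw]].
by apply: nwalk_snoc (IH _ _ Hw) _; rewrite sE.
Qed.

Lemma nwalk_sub E E' n x y : subrel E E' -> nwalk E n x y -> nwalk E' n x y.
Proof.
move=> sub; elim: n x => [|n IH] x //= /existsP[w /andP[Exw Hw]].
by apply/existsP; exists w; rewrite (sub _ _ Exw) (IH _ Hw).
Qed.

Lemma path_nwalk E x p : path E x p -> nwalk E (size p) x (last x p).
Proof.
elim: p x => [|w p IH] x /=; first by [].
move=> /andP[Exw Hp]; apply/existsP; exists w; by rewrite Exw IH.
Qed.

Lemma dist_le E n x y : nwalk E n x y -> dist E x y <= n.
Proof.
move=> Hw; rewrite /dist; case: (ltnP n #|T|) => Hn.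
  rewrite leqNgt; apply/negP => Hlt.
  by have := before_find 0 Hlt; rewrite nth_iota // add0n Hw.
by apply: leq_trans (find_size _ _) _; rewrite size_iota.
Qed.

Lemma dist_walk E x y : dist E x y < #|T| -> nwalk E (dist E x y) x y.
Proof.
rewrite /dist => Hlt.
have Hh : has (fun n => nwalk E n x y) (iota 0 #|T|) by rewrite has_find size_iota.
by have := nth_find 0 Hh; rewrite nth_iota // add0n.
Qed.

Lemma dist_lt_size E x y n : nwalk E n x y -> n < #|T| -> dist E x y < #|T|.
Proof. by move=> Hw Hn; apply: leq_ltn_trans (dist_le Hw) Hn. Qed.

Lemma connect_dist E x y : connect E x y -> dist E x y < #|T|.
Proof.
move=> /connectP[p Hp ->].
case: (shortenP Hp) => p' Hp' Hu _.
apply: dist_lt_size (path_nwalk Hp') _.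
have := max_card (mem (x :: p')); move/card_uniqP: Hu => -> /=.
by [].
Qed.

Lemma dist_mono E E' x y : subrel E E' -> dist E' x y <= dist E x y.
Proof.
move=> sub; case: (ltnP (dist E x y) #|T|) => H.
  by apply: dist_le; apply: nwalk_sub sub (dist_walk H).
apply: leq_trans H; rewrite /dist.
by apply: leq_trans (find_size _ _) _; rewrite size_iota.
Qed.

Lemma induced_sym (e : rel T) S : symmetric e -> symmetric (induced e S).
Proof. move=> se x y; rewrite /induced /= (se x y); by case: (e y x); case: (x \in S); case: (y \in S). Qed.

End Walks.


Section BFS.
Variable T : finType.
Variable e : rel T.
Hypothesis se : symmetric e.
Variable W : {set T}.
Variable rho : T.
Hypothesis rW : rho \in W.
Hypothesis cW : forall x y, x \in W -> y \in W -> connect (induced e W) x y.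

Definition Dd u := dist (induced e W) rho u.
Definition par u := odflt u [pick z | e u z && (z \in W) && ((Dd z).+1 == Dd u)].
Definition tEdge : rel T := fun x y => (x \in W) && (y \in W) &&
  ((x != rho) && (par x == y) || (y != rho) && (par y == x)).
Arguments tEdge : simpl never.
Definition mkT := RTree W tEdge rho.

Lemma D_lt u : u \in W -> Dd u < #|T|.
Proof. by move=> uW; apply: connect_dist; apply: cW. Qed.

Lemma D_walk u : u \in W -> nwalk (induced e W) (Dd u) rho u.
Proof. by move=> uW; apply: dist_walk; apply: D_lt. Qed.

Lemma par_spec u : u \in W -> u != rho ->
  [/\ e u (par u), par u \in W & (Dd (par u)).+1 = Dd u].
Proof.
move=> uW nur.
have sI := induced_sym W se.
have Hw := nwalk_sym sI (D_walk uW).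
have Hlt := D_lt uW.
rewrite /par; case: pickP => [z /andP[/andP[euz zW] /eqP Hz]|none] /=.
  by [].
exfalso; move: Hw Hlt; case Hd: (Dd u) => [|n].
  by move=> /= /eqP Hur; move: nur; rewrite Hur eqxx.
move=> /= /existsP[z /andP[Iuz Hz]] Hlt.
move: (Iuz); rewrite /induced /= => /andP[euz /andP[_ zW]].
have Hz' := nwalk_sym sI Hz.
have Dz : Dd z <= n by apply: dist_le.
have Du : Dd u <= (Dd z).+1.
  apply: dist_le; apply: nwalk_snoc (dist_walk _) _.
    by apply: leq_ltn_trans Dz (ltnW Hlt).
  by rewrite sI.
have := none z; rewrite euz zW /= Hd.
by move: Du; rewrite Hd ltnS => Du; rewrite eqSS eqn_leq Dz Du.
Qed.

Lemma tEdge_e x y : tEdge x y -> [&& e x y, x \in W & y \in W].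
Proof.
rewrite /tEdge => /andP[/andP[xW yW] /orP[/andP[nx /eqP <-]|/andP[ny /eqP <-]]].
  by case: (par_spec xW nx) => -> -> _; rewrite xW.
by case: (par_spec yW ny) => H pW _; rewrite se H pW yW.
Qed.

Lemma tEdge_sym : symmetric tEdge.
Proof. by move=> x y; rewrite /tEdge [(x \in W) && _]andbC orbC. Qed.

Lemma tEdge_sub : subrel tEdge (induced e W).
Proof. by move=> x y /tEdge_e; rewrite /induced /=. Qed.

Lemma tEdge_par u : u \in W -> u != rho -> tEdge u (par u).
Proof.
move=> uW nu; case: (par_spec uW nu) => _ pW _.
by rewrite /tEdge uW pW nu eqxx.
Qed.

Lemma conn_root n u : u \in W -> Dd u <= n -> connect tEdge u rho.
Proof.
elim: n u => [|n IH] u uW Hu.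
  have := D_walk uW; move: Hu; rewrite leqn0 => /eqP -> /= /eqP ->.
  exact: connect0.
case: (eqVneq u rho) => [->|nu]; first exact: connect0.
case: (par_spec uW nu) => _ pW Hp.
apply: connect_trans (connect1 (tEdge_par uW nu)) _.
by apply: IH pW _; rewrite -ltnS Hp.
Qed.

Lemma walk_root n u : u \in W -> Dd u = n -> nwalk tEdge n rho u.
Proof.
elim: n u => [|n IH] u uW Hu.
  have := D_walk uW; rewrite Hu //.
case: (eqVneq u rho) => [Hur|nu].
  have H0 : Dd rho <= 0 by apply: (@dist_le _ _ 0); rewrite /= eqxx.
  by move: H0; rewrite -Hur Hu.
case: (par_spec uW nu) => _ pW Hp.
apply: nwalk_snoc (IH _ pW _) _.
  by apply/eqP; rewrite -eqSS Hp Hu.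
by rewrite tEdge_sym; apply: tEdge_par.
Qed.

Lemma nbr_par x w : tEdge x w -> Dd w <= Dd x -> (x != rho) && (par x == w).
Proof.
move=> H Hle; move: (H); rewrite /tEdge => /andP[/andP[xW wW] /orP[//|/andP[nw /eqP Hp]]].
case: (par_spec wW nw) => _ _; rewrite Hp => Hd.
by move: Hle; rewrite -Hd ltnn.
Qed.

Lemma max_in (s : seq T) (f : T -> nat) x0 : x0 \in s ->
  exists2 x, x \in s & forall y, y \in s -> f y <= f x.
Proof.
elim: s x0 => [//|a s IH] x0 _.
case: s IH => [|b s] IH.
  by exists a; rewrite ?inE // => y; rewrite inE => /eqP ->.
have [x xs Hx] := IH b (mem_head _ _).
case: (leqP (f a) (f x)) => Hax.
  exists x; first by rewrite inE xs orbT.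
  by move=> y; rewrite inE => /orP[/eqP ->//|]; apply: Hx.
exists a; first exact: mem_head.
move=> y; rewrite inE => /orP[/eqP ->//|ys].
by apply: leq_trans (Hx _ ys) (ltnW Hax).
Qed.

Lemma acyclic (c : seq T) : uniq c -> 2 < size c -> ~~ cycle tEdge c.
Proof.
move=> Hu Hs; apply/negP => Hc.
have c0 : (head rho c) \in c by case: c Hs {Hu Hc} => //= a s _; exact: mem_head.
have [x xc Hx] := max_in Dd c0.
case: (rot_to xc) => i q Hrot.
have Hc' : cycle tEdge (x :: q) by rewrite -Hrot rot_cycle.
have Hu' : uniq (x :: q) by rewrite -Hrot rot_uniq.
have Hs' : size (x :: q) = size c by rewrite -Hrot size_rot.
have inq : forall y, y \in q -> y \in c.
  by move=> y yq; rewrite -(mem_rot i) Hrot inE yq orbT.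
clear Hrot; move: Hc' Hu' Hs'; case: q inq => [|a [|b q]] inq.
- by move=> _ _ Hsz; move: Hs; rewrite -Hsz.
- by move=> _ _ Hsz; move: Hs; rewrite -Hsz.
rewrite /=.
rewrite rcons_path => /andP[Exa /and3P[_ _ Elast]] /andP[_ /andP[naq _]] _.
set l := last b q in Elast.
have lbq : l \in b :: q by apply: mem_last.
have la : l != a by apply/eqP => Hl; move: naq; rewrite -Hl lbq.
have /andP[_ /eqP Ha] := nbr_par Exa (Hx a (inq a (mem_head _ _))).
rewrite tEdge_sym in Elast.
have lc : l \in c by apply: inq; rewrite inE lbq orbT.
have /andP[_ /eqP Hl] := nbr_par Elast (Hx l lc).
by move: la; rewrite -Ha -Hl eqxx.
Qed.

Lemma mkT_bfs : is_bfs_tree e mkT.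
Proof.
split.
  split => //=.
  - exact: tEdge_e.
  - exact: tEdge_sym.
  - move=> x y xW yW.
    have H1 : connect tEdge x rho := conn_root xW (leqnn _).
    have H2 : connect tEdge y rho := conn_root yW (leqnn _).
    rewrite (sym_connect_sym tEdge_sym) in H2.
    exact: connect_trans H1 H2.
  - exact: acyclic.
move=> v /= vW; apply/eqP; rewrite eqn_leq; apply/andP; split.
  exact: dist_le (walk_root vW (erefl _)).
exact: dist_mono tEdge_sub.
Qed.

End BFS.


Section Minor.
Variable U : finType.

Definition kminor (S : {set U}) (E : rel U) (k : nat) : Prop :=
  exists B : 'I_k -> {set U},
    [/\ (forall i, B i \subset S), (forall i, B i != set0),
        (forall i x y, x \in B i -> y \in B i -> connect (induced E (B i)) x y),
        (forall i j, i != j -> [disjoint B i & B j]) &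
        (forall i j, i != j -> exists x y, [/\ x \in B i, y \in B j & E x y])].

Lemma connect_induced_sub (E : rel U) (A B : {set U}) x y :
  A \subset B -> connect (induced E A) x y -> connect (induced E B) x y.
Proof.
move=> sAB; apply: connect_sub => a b /=; rewrite /induced /= => /and3P[Eab aA bA].
by apply: connect1; rewrite /induced /= Eab (subsetP sAB _ aA) (subsetP sAB _ bA).
Qed.

Section Lift.
Variables (S1 S2 : {set U}) (E1 E2 : rel U) (beta : U -> {set U}).
Hypothesis bsub : forall u, u \in S2 -> beta u \subset S1.
Hypothesis bconn : forall u a b, u \in S2 -> a \in beta u -> b \in beta u ->
  connect (induced E1 (beta u)) a b.
Hypothesis bedge : forall u w, u \in S2 -> w \in S2 -> E2 u w ->
  exists a b, [/\ a \in beta u, b \in beta w & E1 a b].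

Lemma conn_union (C : {set U}) : C \subset S2 ->
  (forall u w, u \in C -> w \in C -> connect (induced E2 C) u w) ->
  forall a b, a \in \bigcup_(u in C) beta u -> b \in \bigcup_(u in C) beta u ->
  connect (induced E1 (\bigcup_(u in C) beta u)) a b.
Proof.
move=> sC cC a b /bigcupP[u uC au] /bigcupP[w wC bw].
have sub : forall v, v \in C -> beta v \subset \bigcup_(u in C) beta u.
  by move=> v vC; apply/subsetP => z zv; apply/bigcupP; exists v.
have := cC _ _ uC wC => /connectP[p Hp Hw].
elim: p u uC a au Hp Hw => [|v p IH] u uC a au /= Hp Hw.
  subst w; apply: connect_induced_sub (sub _ uC) _; exact: bconn (subsetP sC _ uC) au bw.
move: Hp => /andP[Huv Hp]; move: (Huv); rewrite /induced /= => /and3P[E2uv _ vC].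
have [a1 [b1 [a1u b1v E1ab]]] := bedge (subsetP sC _ uC) (subsetP sC _ vC) E2uv.
apply: connect_trans (connect_induced_sub (sub _ uC) (bconn (subsetP sC _ uC) au a1u)) _.
apply: connect_trans (IH _ vC _ b1v Hp Hw).
apply: connect1; rewrite /induced /= E1ab.
by rewrite (subsetP (sub _ uC) _ a1u) (subsetP (sub _ vC) _ b1v).
Qed.

Hypothesis bne : forall u, u \in S2 -> beta u != set0.
Hypothesis bdisj : forall u w, u \in S2 -> w \in S2 -> u != w -> [disjoint beta u & beta w].

Lemma lift_minor k : kminor S2 E2 k -> kminor S1 E1 k.
Proof.
move=> [B [Bs Bne Bc Bd Be]].
exists (fun i => \bigcup_(u in B i) beta u); split.
- move=> i; apply/subsetP => x /bigcupP[u uB xu].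
  exact: subsetP (bsub (subsetP (Bs i) _ uB)) _ xu.
- move=> i; have /set0Pn[u uB] := Bne i.
  have /set0Pn[x xu] := bne (subsetP (Bs i) _ uB).
  by apply/set0Pn; exists x; apply/bigcupP; exists u.
- move=> i; apply: conn_union => //; exact: Bc.
- move=> i j nij; rewrite -setI_eq0; apply/eqP/setP => x; rewrite inE in_set0.
  apply/negP => /andP[/bigcupP[u uB xu] /bigcupP[w wB xw]].
  have uw : u != w.
    apply/eqP => Huw; subst w; have := Bd i j nij.
    by rewrite -setI_eq0 => /eqP/setP/(_ u); rewrite inE uB wB in_set0.
  have := bdisj (subsetP (Bs i) _ uB) (subsetP (Bs j) _ wB) uw.
  by rewrite -setI_eq0 => /eqP/setP/(_ x); rewrite inE xu xw in_set0.
- move=> i j nij; have [x [y [xB yB Exy]]] := Be i j nij.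
  have [a [b [au bw Eab]]] := bedge (subsetP (Bs i) _ xB) (subsetP (Bs j) _ yB) Exy.
  by exists a, b; split => //; apply/bigcupP; [exists x | exists y].
Qed.

End Lift.

Lemma kminor_subset (S S' : {set U}) E k : S' \subset S -> kminor S' E k -> kminor S E k.
Proof.
move=> sS [B [Bs Bne Bc Bd Be]]; exists B; split => // i.
exact: subset_trans (Bs i) sS.
Qed.

End Minor.


Section Mader.
Variable U : finType.
Implicit Types (S : {set U}) (E : rel U).

Definition deg S E x := #|[set y in S | E x y]|.
Definition m2 S E := \sum_(x in S) deg S E x.
Definition PS S E := [set p : U * U | [&& p.1 \in S, p.2 \in S & E p.1 p.2]].

Lemma m2_PS S E : m2 S E = #|PS S E|.
Proof.
rewrite /m2 /deg.
rewrite (eq_bigr (fun x => \sum_(y | (y \in S) && E x y) 1)); last first.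
  by move=> x _; rewrite sum1dep_card.
rewrite pair_big_dep sum1dep_card; apply: eq_card => p.
by rewrite /PS !inE; case: p => a b /=; rewrite andbA.
Qed.

Definition contr E (x y : U) : rel U := fun u w =>
  (u != w) && [|| E u w, (u == x) && E y w | (w == x) && E u y].

Lemma contr_sym E x y : symmetric E -> symmetric (contr E x y).
Proof.
move=> sE u w; rewrite /contr eq_sym (sE u w) (sE y w) (sE u y).
by case: (E w u); case: (u == x); case: (w == x); case: (E w y); case: (E y u).
Qed.

Lemma contr_irr E x y : irreflexive (contr E x y).
Proof. by move=> u; rewrite /contr eqxx. Qed.

Section Contract.
Variables (S : {set U}) (E : rel U) (x y : U).
Hypotheses (sE : symmetric E) (iE : irreflexive E) (xS : x \in S) (yS : y \in S)
  (nxy : x != y) (Exy : E x y).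

Definition Cm := [set z in S | E x z && E y z].
Definition Ls := [set (x, y); (y, x)] :|: [set (y, w) | w in Cm] :|: [set (w, y) | w in Cm].
Definition phi z := if z == y then x else z.

Lemma good_bad a b a' b' : (a, b) \in PS S E :\: Ls -> (a', b') \in PS S E :\: Ls ->
  a = y -> a' = x -> phi b = phi b' -> False.
Proof.
rewrite !inE /= => /andP[nL /and3P[aS bS Eab]] /andP[nL' /and3P[a'S b'S Ea'b']] Ha Ha'.
subst a a'; rewrite /phi.
case: (eqVneq b y) => [Hb|nby]; first by move: Eab; rewrite Hb iE.
case: (eqVneq b' y) => [Hb'|nb'y] Hp.
  by move: nL; rewrite Hp eqxx !orbT.
subst b'; move: nL.
have : (y, b) \in [set (y, w) | w in Cm] by apply/imsetP; exists b; rewrite // inE bS Ea'b' Eab.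
by move=> ->; rewrite !orbT.
Qed.

Lemma good_swap a b : (a, b) \in PS S E :\: Ls -> (b, a) \in PS S E :\: Ls.
Proof.
rewrite !inE /= => /andP[nL /and3P[aS bS Eab]]; rewrite aS bS sE Eab !andbT.
move: nL; apply: contra.
move=> /orP[/orP[/orP[|]|]|].
- rewrite xpair_eqE => /andP[/eqP -> /eqP ->].
  by rewrite -!orbA; apply/or4P; constructor 2.
- rewrite xpair_eqE => /andP[/eqP -> /eqP ->].
  by rewrite -!orbA; apply/or4P; constructor 1.
- move=> /imsetP[w wC [-> ->]]; rewrite -!orbA; apply/or4P; constructor 4.
  by apply/imsetP; exists w.
- move=> /imsetP[w wC [-> ->]]; rewrite -!orbA; apply/or4P; constructor 3.
  by apply/imsetP; exists w.
Qed.

Lemma phi_eq a a' : phi a = phi a' -> [\/ a = a', a = y /\ a' = x | a = x /\ a' = y].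
Proof.
rewrite /phi => H.
case: (eqVneq a y) H => [->|nay]; case: (eqVneq a' y) => [->|na'y] H.
- by constructor 1.
- by constructor 2.
- by constructor 3.
- by constructor 1.
Qed.

Lemma good_fst a b a' b' : (a, b) \in PS S E :\: Ls -> (a', b') \in PS S E :\: Ls ->
  phi a = phi a' -> phi b = phi b' -> a = a'.
Proof.
move=> g g' Ha Hb; case: (phi_eq Ha) => [//|[H1 H2]|[H1 H2]].
  by case: (good_bad g g' H1 H2 Hb).
by case: (good_bad g' g H2 H1 (esym Hb)).
Qed.

Lemma contr_count : m2 S E <= m2 (S :\ y) (contr E x y) + 2 + 2 * #|Cm|.
Proof.
rewrite !m2_PS.
set A := PS S E.
have H1 : #|A| <= #|A :\: Ls| + #|Ls|.
  by rewrite -(cardsID Ls A) addnC leq_add2l; apply: subset_leq_card; apply: subsetIr.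
have H2 : #|Ls| <= 2 + 2 * #|Cm|.
  rewrite /Ls; apply: leq_trans (leq_card_setU _ _) _.
  rewrite mul2n -addnn addnA leq_add //; last exact: leq_imset_card.
  apply: leq_trans (leq_card_setU _ _) _; rewrite leq_add //; last exact: leq_imset_card.
  by rewrite cards2; case: (_ != _).
pose f (p : U * U) := (phi p.1, phi p.2).
have H3 : #|A :\: Ls| = #|f @: (A :\: Ls)|.
  rewrite card_in_imset // => [[a b]] [a' b'] g g' /= [Ha Hb].
  have -> := good_fst g g' Ha Hb.
  by have -> := good_fst (good_swap g) (good_swap g') Hb Ha.
have H4 : f @: (A :\: Ls) \subset PS (S :\ y) (contr E x y).
  apply/subsetP => q /imsetP[[a b] g ->]; move: (g).
  rewrite !inE /= => /andP[nL /and3P[aS bS Eab]].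
  have px : forall z, z \in S -> phi z \in S :\ y.
    move=> z zS; rewrite /phi !inE; case: (eqVneq z y) => [_|nzy]; rewrite ?xS ?zS ?andbT //.
  move: (px _ aS) (px _ bS); rewrite !inE => -> ->; rewrite /contr /=.
  rewrite /phi; case: (eqVneq a y) => [Ha|nay]; case: (eqVneq b y) => [Hb|nby].
  - by move: Eab; rewrite Ha Hb iE.
  - rewrite eqxx -Ha Eab orbT andbT; apply/eqP => Hxb.
    by move: nL; rewrite Ha -Hxb eqxx ?orbT ?orTb.
  - rewrite eqxx -Hb Eab !orbT andbT; apply/eqP => Hax.
    by move: nL; rewrite Hb Hax eqxx ?orbT ?orTb.
  - rewrite Eab andbT; apply/eqP => Hab; by move: Eab; rewrite Hab iE.
have H5 := subset_leq_card H4.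
rewrite -addnA; apply: leq_trans H1 _; apply: leq_add => //.
by rewrite H3.
Qed.

Lemma contr_lift k : kminor (S :\ y) (contr E x y) k -> kminor S E k.
Proof.
pose beta u := if u == x then [set x; y] else [set u].
apply: (@lift_minor _ S (S :\ y) E (contr E x y) beta).
- move=> u; rewrite /beta !inE => /andP[_ uS]; apply/subsetP => z.
  by case: (u == x); rewrite !inE; [move=> /orP[] /eqP -> | move=> /eqP ->].
- move=> u a b _; rewrite /beta.
  case: (eqVneq u x) => [_|_]; last by rewrite !inE => /eqP -> /eqP ->; exact: connect0.
  have cxy : connect (induced E [set x; y]) x y.
    by apply: connect1; rewrite /induced /= Exy !inE !eqxx orbT.
  have cyx : connect (induced E [set x; y]) y x.
    by rewrite (sym_connect_sym (induced_sym _ sE)).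
  rewrite !inE => /orP[] /eqP -> /orP[] /eqP ->; by [apply: connect0| |].
- move=> u w; rewrite !inE => /andP[nuy uS] /andP[nwy wS]; rewrite /contr.
  move=> /andP[nuw /or3P[Euw|/andP[/eqP ux Eyw]|/andP[/eqP wx Euy]]].
  + exists u, w; rewrite /beta; split => //.
    * by case: (eqVneq u x) => [->|_]; rewrite !inE eqxx ?orbT.
    * by case: (eqVneq w x) => [->|_]; rewrite !inE eqxx ?orbT.
  + exists y, w; rewrite /beta ux eqxx; split => //; first by rewrite !inE eqxx orbT.
    by rewrite -ux eq_sym (negbTE nuw) inE.
  + exists u, y; rewrite /beta wx eqxx; split => //; last by rewrite !inE eqxx orbT.
    by rewrite -wx (negbTE nuw) inE.
- move=> u _; rewrite /beta; apply/set0Pn; exists u.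
  by case: (u == x) /eqP => [->|_]; rewrite !inE eqxx.
- move=> u w; rewrite !inE => /andP[nuy _] /andP[nwy _] nuw; rewrite /beta.
  rewrite -setI_eq0; apply/eqP/setP => z; rewrite !inE.
  case: (eqVneq u x) => [ux|nux]; case: (eqVneq w x) => [wx|nwx].
  - by move: nuw; rewrite ux wx eqxx.
  - apply/negP; rewrite !inE => /andP[H1 /eqP Hw]; subst z.
    by move: H1 => /orP[] /eqP H; [move: nwx | move: nwy]; rewrite H eqxx.
  - apply/negP; rewrite !inE => /andP[/eqP Hz H1]; subst z.
    by move: H1 => /orP[] /eqP H; [move: nux | move: nuy]; rewrite -H eqxx.
  - by apply/negP; rewrite !inE => /andP[/eqP -> /eqP Hw]; move: nuw; rewrite Hw eqxx.
Qed.

End Contract.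

Lemma kminor_ext S (N : {set U}) E (k : nat) x : symmetric E -> N \subset S -> x \in S -> x \notin N ->
  (forall z, z \in N -> E x z) -> kminor N E k -> kminor S E k.+1.
Proof.
move=> sE sN xS xN Hx [B [Bs Bne Bc Bd Be]].
pose B' (i : 'I_k.+1) := if unlift ord_max i is Some j then B j else [set x].
have xB : forall j, x \notin B j by move=> j; apply: contra xN; apply: subsetP (Bs j) x.
exists B'; split; rewrite /B'.
- move=> i; case: unliftP => [j _|_]; first exact: subset_trans (Bs j) sN.
  by rewrite sub1set.
- by move=> i; case: unliftP => [j _|_]; [exact: Bne | apply/set0Pn; exists x; rewrite inE].
- move=> i a b; case: unliftP => [j _|_]; first exact: Bc.
  by rewrite !inE => /eqP -> /eqP ->; exact: connect0.
- move=> i i' nii; case: unliftP => [j Hi|Hi]; case: unliftP => [j' Hi'|Hi'].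
  + apply: Bd; apply: contra nii => /eqP Hj; by rewrite Hi Hi' Hj.
  + by rewrite disjoint_sym disjoints1.
  + by rewrite disjoints1.
  + by move: nii; rewrite Hi Hi' eqxx.
- move=> i i' nii; case: unliftP => [j Hi|Hi]; case: unliftP => [j' Hi'|Hi'].
  + apply: Be; apply: contra nii => /eqP Hj; by rewrite Hi Hi' Hj.
  + have /set0Pn[z zB] := Bne j; exists z, x; rewrite inE eqxx; split => //.
    by rewrite sE; apply: Hx; apply: subsetP (Bs j) _ zB.
  + have /set0Pn[z zB] := Bne j'; exists x, z; rewrite inE eqxx; split => //.
    by apply: Hx; apply: subsetP (Bs j') _ zB.
  + by move: nii; rewrite Hi Hi' eqxx.
Qed.

End Mader.


Section Mader2.
Variable U : finType.
Implicit Types (S : {set U}) (E : rel U).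

Lemma mader r : forall S E, symmetric E -> irreflexive E -> 0 < #|S| ->
  2 ^ r.+1 * #|S| <= m2 S E -> kminor S E r.+1.
Proof.
elim: r => [|r IHr] S E sE iE Sn Hm.
  have /card_gt0P[x xS] := Sn.
  exists (fun _ => [set x]); split.
  - by move=> _; rewrite sub1set.
  - by move=> _; apply/set0Pn; exists x; rewrite inE.
  - by move=> _ a b; rewrite !inE => /eqP -> /eqP ->; exact: connect0.
  - by move=> i j; rewrite (ord1 i) (ord1 j) eqxx.
  - by move=> i j; rewrite (ord1 i) (ord1 j) eqxx.
have [n] := ubnP #|S|; elim: n S E sE iE Sn Hm => [//|n IHn] S E sE iE Sn Hm Hlt.
have [x [y [xS yS Exy]]] : exists x y, [/\ x \in S, y \in S & E x y].
  case: (boolP [exists x in S, exists y in S, E x y]).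
    by move=> /exists_inP[x xS /exists_inP[y yS Exy]]; exists x, y.
  move=> Hn; exfalso; move: Hm.
  rewrite /m2 big1 ?muln_eq0; last first.
    move=> z zS; apply/eqP; rewrite cards_eq0; apply/eqP/setP => w; rewrite !inE.
    apply/negP => /andP[wS Ezw]; move: Hn => /negP; apply; apply/exists_inP; exists z => //.
    by apply/exists_inP; exists w.
  rewrite leqn0 muln_eq0 expn_eq0 /=; move: Sn; rewrite lt0n => /negbTE ->. done.
case: (boolP [exists y' in S, E x y' && (2 ^ r.+2 * #|S :\ y'| <= m2 (S :\ y') (contr E x y'))]).
  move=> /exists_inP[y' y'S /andP[Exy' Hm']].
  have nxy' : x != y' by apply/eqP => H; move: Exy'; rewrite H iE.
  apply: (contr_lift sE xS y'S Exy').
  have Hc := cardsD1 y' S; rewrite y'S in Hc.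
  apply: IHn => //.
  - exact: contr_sym.
  - exact: contr_irr.
  - by apply/card_gt0P; exists x; rewrite !inE nxy'.
  - by move: Hlt; rewrite Hc.
move=> Hno.
have HB : forall z, z \in S -> E x z -> 2 ^ r.+1 <= #|Cm S E x z|.
  move=> z zS Exz.
  have nxz : x != z by apply/eqP => H; move: Exz; rewrite H iE.
  have Hcz : m2 (S :\ z) (contr E x z) < 2 ^ r.+2 * #|S :\ z|.
    rewrite ltnNge; apply/negP => H; move: Hno => /negP; apply.
    by apply/exists_inP; exists z => //; rewrite Exz H.
  have Hcc := contr_count sE iE xS nxz.
  have Hc := cardsD1 z S; rewrite zS in Hc.
  move: Hcz Hcc Hm; rewrite Hc expnS.
  set P := 2 ^ r.+1; set s := #|S :\ z|; set c := #|Cm S E x z|.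
  set m := m2 S E; set m' := m2 _ _.
  rewrite mulnDr muln1 => H1 H2 H3.
  have : 2 * P <= 1 + 2 * c.
    rewrite -(leq_add2r (2 * P * s)); apply: leq_trans H3 _.
    rewrite -ltnS; apply: leq_ltn_trans H2 _; lia.
  lia.
pose N := [set z in S | E x z].
have sN : N \subset S by apply/subsetP => z; rewrite inE => /andP[].
have xN : x \notin N by rewrite inE iE andbF.
apply: (kminor_ext sE sN xS xN); first by move=> z; rewrite inE => /andP[].
apply: IHr => //.
  by apply/card_gt0P; exists y; rewrite inE yS Exy.
rewrite /m2 mulnC -sum_nat_const; apply: leq_sum => z zN.
move: (zN); rewrite inE => /andP[zS Exz].
apply: leq_trans (HB z zS Exz) _; apply: eq_leq; apply: eq_card => w.
by rewrite !inE andbA.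
Qed.

Lemma mader_deg r S E : symmetric E -> irreflexive E -> ~ kminor S E r.+1 ->
  forall S', S' \subset S -> S' != set0 -> exists2 x, x \in S' & deg S' E x < 2 ^ r.+1.
Proof.
move=> sE iE nK S' sS' ne.
case: (boolP [exists x in S', deg S' E x < 2 ^ r.+1]).
  by move=> /exists_inP[x xS Hx]; exists x.
move=> Hn; exfalso; apply: nK; apply: kminor_subset sS' _.
apply: mader => //; first by rewrite card_gt0.
rewrite /m2 mulnC -sum_nat_const; apply: leq_sum => z zS.
rewrite leqNgt; apply/negP => H; move: Hn => /negP; apply; apply/exists_inP; by exists z.
Qed.

End Mader2.

Section Degen.
Variable U : finType.
Implicit Types (S : {set U}) (E : rel U).

Definition degOK S E D := forall S', S' \subset S -> S' != set0 ->
  exists2 x, x \in S' & deg S' E x < D.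

Definition orient_col S E D (o : rel U) (col : U -> 'I_D) :=
  [/\ (forall u w, o u w -> [&& u \in S, w \in S & E u w]),
      (forall u w, u \in S -> w \in S -> E u w -> o u w || o w u),
      (forall u, #|[set w | o u w]| < D) &
      (forall u w, u \in S -> w \in S -> E u w -> col u != col w)].

Lemma degen D (HD : 0 < D) S E : symmetric E -> irreflexive E -> degOK S E D ->
  {o : rel U & {col : U -> 'I_D | orient_col S E o col}}.
Proof.
move=> sE iE; have [n] := ubnP #|S|; elim: n S => [//|n IHn] S Hlt Hok.
case: (set_0Vmem S) => [S0|[v0 v0S]].
  exists (fun _ _ => false), (fun _ => Ordinal HD); split => //.
  - by move=> u w; rewrite S0 inE.
  - move=> u; apply: leq_ltn_trans HD; rewrite leqn0; apply/eqP.
    by apply: eq_card0 => w; rewrite !inE.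
  - by move=> u w; rewrite S0 inE.
case: (pickP (fun v => (v \in S) && (deg S E v < D))) => [v /andP[vS dv] | none]; last first.
  exfalso; have : S != set0 by apply/set0Pn; exists v0.
  move=> /(Hok S (subxx S))[x xS Hx]; by have := none x; rewrite xS Hx.
have Hc := cardsD1 v S; rewrite vS in Hc.
have Hok' : degOK (S :\ v) E D.
  by move=> S' sS'; apply: Hok; apply: subset_trans sS' _; apply: subD1set.
have Hlt' : #|S :\ v| < n by move: Hlt; rewrite Hc.
have [o [col [o1 o2 o3 c1]]] := IHn (S :\ v) Hlt' Hok'.
pose N := [set w in S | E v w].
pose used := col @: N.
have Hused : #|used| < D := leq_ltn_trans (leq_imset_card _ _) dv.
case: (pickP (fun c : 'I_D => c \in ~: used)) => [c cu|none]; last first.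
  exfalso; have := cardsC used; rewrite card_ord.
  have -> : #|~: used| = 0 by apply/eqP; rewrite cards_eq0; apply/eqP/setP => c; rewrite none inE.
  by rewrite addn0 => H; move: Hused; rewrite H ltnn.
exists (fun u w => o u w || (u == v) && (w \in S) && E v w).
exists (fun u => if u == v then c else col u); split.
- move=> u w /orP[/o1|/andP[/andP[/eqP -> wS] Evw]].
    by rewrite !inE => /and3P[/andP[_ ->] /andP[_ ->] ->].
  by rewrite vS wS Evw.
- move=> u w uS wS Euw.
  case: (eqVneq u v) => [Huv|nuv]; first by subst u; rewrite wS Euw !orbT.
  case: (eqVneq w v) => [Hwv|nwv]; first by subst w; rewrite uS (sE v u) Euw !orbT.
  have := o2 u w; rewrite !inE nuv nwv uS wS => /(_ isT isT Euw) /orP[->|->] //.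
  by rewrite !orbT.
- move=> u; case: (eqVneq u v) => [->|nuv].
    apply: leq_ltn_trans dv; apply: subset_leq_card; apply/subsetP => w.
    rewrite !inE /= => /orP[/o1|//].
    by rewrite !inE eqxx.
  apply: leq_ltn_trans (o3 u); apply: subset_leq_card; apply/subsetP => w.
  by rewrite !inE /= orbF.
- move=> u w uS wS Euw.
  case: (eqVneq u v) => [Huv|nuv]; case: (eqVneq w v) => [Hwv|nwv].
  + by move: Euw; rewrite Huv Hwv iE.
  + apply/eqP => Hcw; move: cu; rewrite inE Hcw => /negP; apply; apply/imsetP; exists w => //.
    by rewrite inE wS -Huv Euw.
  + apply/eqP => Hcw; move: cu; rewrite inE -Hcw => /negP; apply; apply/imsetP; exists u => //.
    by rewrite inE uS -Hwv sE Euw.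
  + by apply: c1 => //; rewrite !inE ?nuv ?nwv ?uS ?wS.
Qed.

End Degen.


Section ListHelp.
Variables A B : Type.

Lemma In_cat (x : A) (s1 s2 : seq A) : List.In x (s1 ++ s2) <-> List.In x s1 \/ List.In x s2.
Proof.
elim: s1 => [|y s IH] /=; first by split; [right|case].
rewrite IH; tauto.
Qed.

Lemma In_flatten (x : A) (ss : seq (seq A)) :
  List.In x (flatten ss) <-> exists s, List.In s ss /\ List.In x s.
Proof.
elim: ss => [|s ss IH] /=; first by split; [|case=> s []].
rewrite In_cat IH; split.
  by case=> [H|[s' [H1 H2]]]; [exists s; split; [left|] | exists s'; split; [right|]].
by case=> s' [[<-|H1] H2]; [left | right; exists s'].
Qed.

Lemma In_map (f : A -> B) (y : B) (s : seq A) :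
  List.In y (map f s) <-> exists x, List.In x s /\ y = f x.
Proof.
elim: s => [|x s IH] /=; first by split; [|case=> x []].
rewrite IH; split.
  by case=> [<-|[x' [H1 ->]]]; [exists x; split; [left|] | exists x'; split; [right|]].
by case=> x' [[<-|H1] ->]; [left | right; exists x'].
Qed.

Lemma all_In (p : pred A) s x : all p s -> List.In x s -> p x.
Proof. by elim: s => [|y s IH] //= /andP[py ps] [<-|H]; [|apply: IH]. Qed.

Lemma In_has (p : pred A) s x : List.In x s -> p x -> has p s.
Proof. by elim: s => [|y s IH] //= [<-|H] px; [rewrite px | rewrite (IH H px) orbT]. Qed.

Lemma has_In (p : pred A) s : has p s -> exists x, List.In x s /\ p x.
Proof.
elim: s => [|y s IH] //= /orP[py|ps]; first by exists y; split; [left|].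
by have [x [H1 H2]] := IH ps; exists x; split; [right|].
Qed.

Lemma pairwise_In (r : rel A) s x y :
  pairwise r s -> List.In x s -> List.In y s -> [\/ x = y, r x y | r y x].
Proof.
elim: s => [|z s IH] //= /andP[az ps] [<-|Hx] [<-|Hy].
- by constructor 1.
- by constructor 2; apply: all_In az Hy.
- by constructor 3; apply: all_In az Hx.
- exact: IH.
Qed.

End ListHelp.

Lemma mem_In (A : eqType) (x : A) s : x \in s -> List.In x s.
Proof. by elim: s => [|y s IH] //=; rewrite inE => /orP[/eqP ->|H]; [left|right; apply: IH]. Qed.

Lemma In_mem (A : eqType) (x : A) s : List.In x s -> x \in s.
Proof. by elim: s => [|y s IH] //= [->|H]; rewrite inE ?eqxx // IH ?orbT. Qed.

Lemma pairwise_uniqP (A : eqType) (r : rel A) s :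
  uniq s -> (forall x y, x \in s -> y \in s -> x != y -> r x y) -> pairwise r s.
Proof.
elim: s => [|x s IH] //= /andP[xs us] H; apply/andP; split.
  apply/allP => y ys; apply: H; rewrite ?inE ?eqxx ?ys ?orbT //.
  by apply: contraNneq xs => ->.
by apply: IH => // a b a_s b_s; apply: H; rewrite inE ?a_s ?b_s orbT.
Qed.

Section Units.
Variable T : finType.
Variable e : rel T.
Hypotheses (se : symmetric e) (ie : irreflexive e).
Variable F : seq (rtree T).
Hypothesis HF : is_bfs_forest e F.

Lemma inF_eq t1 t2 v : List.In t1 F -> List.In t2 F -> v \in tV t1 -> v \in tV t2 -> t1 = t2.
Proof.
move=> H1 H2 v1 v2; case: HF => _ Hp.
case: (pairwise_In Hp H1 H2) => // Hd; exfalso.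
  by move: Hd; rewrite -setI_eq0 => /eqP/setP/(_ v); rewrite inE v1 v2 in_set0.
by move: Hd; rewrite -setI_eq0 => /eqP/setP/(_ v); rewrite inE v1 v2 in_set0.
Qed.

Lemma inF_bfs t : List.In t F -> is_bfs_tree e t.
Proof. by case: HF => H _; apply: H. Qed.

Lemma root_in t : List.In t F -> troot t \in tV t.
Proof. by move=> /inF_bfs [[]]. Qed.

Lemma tree_conn t x y : List.In t F -> x \in tV t -> y \in tV t ->
  connect (induced e (tV t)) x y.
Proof.
move=> /inF_bfs [[H1 _ _ H4 _] _] xt yt.
apply: connect_sub (H4 _ _ xt yt) => a b Hab; apply: connect1.
by move: (H1 _ _ Hab); rewrite /induced /=.
Qed.

Definition ow v := ohead [seq t <- F | v \in tV t].
Definition un v := if ow v is Some t then troot t else v.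

Lemma ow_spec v : (exists t, [/\ ow v = Some t, List.In t F & v \in tV t]) \/
  (ow v = None /\ forall t, List.In t F -> v \notin tV t).
Proof.
rewrite /ow; elim: F => [|t s IH] /=; first by right.
case Hv: (v \in tV t) => /=; first by left; exists t; split => //; left.
case: IH => [[t' [H1 H2 H3]]|[H1 H2]].
  by left; exists t'; split => //; right.
by right; split => // t'' [<-|H]; [rewrite Hv | apply: H2].
Qed.

Lemma un_tree t v : List.In t F -> v \in tV t -> un v = troot t.
Proof.
move=> Ht vt; rewrite /un; case: (ow_spec v) => [[t' [-> H2 H3]]|[_ H]].
  by rewrite (inF_eq H2 Ht H3 vt).
by move: (H _ Ht); rewrite vt.
Qed.

Lemma un_free v : (forall t, List.In t F -> v \notin tV t) -> un v = v.
Proof.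
move=> H; rewrite /un; case: (ow_spec v) => [[t' [-> H2 H3]]|[-> _]] //.
by move: (H _ H2); rewrite H3.
Qed.

Lemma bset_tree t : List.In t F -> [set b | un b == troot t] = tV t.
Proof.
move=> Ht; apply/setP => b; rewrite inE.
case Hb: (b \in tV t); first by rewrite (un_tree Ht Hb) eqxx.
apply/negP => /eqP Hu; case: (ow_spec b) => [[t' [Ho H2 H3]]|[Ho H]].
  move: Hu; rewrite /un Ho => Hr.
  have Ht' := inF_eq H2 Ht (root_in H2); rewrite Hr in Ht'.
  by move: Hb; rewrite -(Ht' (root_in Ht)) H3.
by move: Hu; rewrite /un Ho => Hr; move: Hb; rewrite Hr root_in.
Qed.

Lemma bset_free v : (forall t, List.In t F -> v \notin tV t) -> [set b | un b == v] = [set v].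
Proof.
move=> H; apply/setP => b; rewrite !inE.
case: (ow_spec b) => [[t' [Ho H2 H3]]|[Ho H']].
  rewrite /un Ho.
  have h1 : troot t' != v by apply: contraNneq (H _ H2) => <-; exact: root_in.
  have h2 : b != v by apply: contraNneq (H _ H2) => <-.
  by rewrite (negbTE h1) (negbTE h2).
by rewrite /un Ho.
Qed.

Lemma un_un v : un (un v) = un v.
Proof.
case: (ow_spec v) => [[t [Ho H2 H3]]|[Ho H]].
  have -> : un v = troot t by rewrite /un Ho.
  exact: un_tree H2 (root_in H2).
by rewrite (un_free H) (un_free H).
Qed.

Definition SH := [set un v | v in T].
Definition EH : rel T := fun u w =>
  (u != w) && [exists a, exists b, (un a == u) && (un b == w) && e a b].
Definition betaH u := [set b | un b == u].

Lemma EH_sym : symmetric EH.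
Proof.
move=> u w; rewrite /EH eq_sym; congr (_ && _); apply/existsP/existsP.
  by move=> [a /existsP[b /andP[/andP[H1 H2] H3]]]; exists b; apply/existsP; exists a; rewrite H1 H2 se.
by move=> [a /existsP[b /andP[/andP[H1 H2] H3]]]; exists b; apply/existsP; exists a; rewrite H1 H2 se.
Qed.

Lemma EH_irr : irreflexive EH.
Proof. by move=> u; rewrite /EH eqxx. Qed.

Lemma beta_conn u a b : u \in SH -> a \in betaH u -> b \in betaH u ->
  connect (induced e (betaH u)) a b.
Proof.
move=> /imsetP[v _ ->]; rewrite /betaH.
case: (ow_spec v) => [[t [Ho H2 H3]]|[Ho H]].
  rewrite (un_tree H2 H3) bset_tree //; exact: tree_conn.
rewrite (un_free H) bset_free // !inE => /eqP -> /eqP ->; exact: connect0.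
Qed.

Lemma H_minor k : kminor SH EH k -> kminor setT e k.
Proof.
apply: (@lift_minor _ setT SH e EH betaH).
- by move=> u _; apply: subsetT.
- exact: beta_conn.
- move=> u w _ _ /andP[_ /existsP[a /existsP[b /andP[/andP[H1 H2] H3]]]].
  by exists a, b; rewrite !inE H1 H2.
- by move=> u /imsetP[v _ ->]; apply/set0Pn; exists v; rewrite inE.
- move=> u w _ _ nuw; rewrite -setI_eq0; apply/eqP/setP => b; rewrite !inE.
  by apply/negP => /andP[/eqP H1 /eqP H2]; move: nuw; rewrite -H1 -H2 eqxx.
Qed.

Lemma kminor_has k : kminor setT e k -> has_K_minor e k.
Proof. by move=> [B [_ H2 H3 H4 H5]]; exists B; split. Qed.

Section K.
Variable D : nat.
Variable colH : T -> 'I_D.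
Hypothesis colH_ok : forall u w, u \in SH -> w \in SH -> EH u w -> colH u != colH w.

Definition isRoot u := has (fun t => u \in tV t) F && (un u == u).
Definition L (a : 'I_D) := [set u | isRoot u && (colH u == a)].
Definition R (a : 'I_D) := [set v | colH (un v) != a].
Definition adj u w := [exists b, (un b == u) && e b w].
Definition EK a : rel T := fun u w =>
  (u \in L a) && (w \in R a) && adj u w || (w \in L a) && (u \in R a) && adj w u.
Definition SK a := L a :|: R a.
Definition betaK a u := if u \in L a then [set b | un b == u] else [set u].

Lemma LR a u : u \in L a -> u \notin R a.
Proof. by rewrite !inE => /andP[/andP[_ /eqP ->] ->]; rewrite negbK. Qed.

Lemma RL a u : u \in R a -> u \notin L a.
Proof. by apply: contraTN => /LR. Qed.

Lemma L_tree a u : u \in L a -> exists t, [/\ List.In t F, u = troot t & betaK a u = tV t].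
Proof.
move=> uL; move: (uL); rewrite inE => /andP[/andP[/has_In[t [Ht ut]] /eqP Hu] _].
exists t; split => //; first by rewrite -Hu (un_tree Ht ut).
by rewrite /betaK uL -{1}Hu (un_tree Ht ut) bset_tree.
Qed.

Lemma betaK_R a u : u \in R a -> betaK a u = [set u].
Proof. by move=> /RL uL; rewrite /betaK (negbTE uL). Qed.

Lemma EK_sym a : symmetric (EK a).
Proof. by move=> u w; rewrite /EK orbC. Qed.

Lemma EK_irr a : irreflexive (EK a).
Proof. by move=> u; rewrite /EK orbb; apply/negP => /andP[/andP[/LR /negP H1 H2] _]. Qed.

Lemma EK_S a u w : EK a u w -> (u \in SK a) && (w \in SK a).
Proof.
by rewrite /EK !inE => /orP[/andP[/andP[-> ->] _]|/andP[/andP[-> ->] _]]; rewrite ?orbT.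
Qed.

Lemma betaK_conn a u x y : u \in SK a -> x \in betaK a u -> y \in betaK a u ->
  connect (induced e (betaK a u)) x y.
Proof.
rewrite inE => /orP[uL|uR].
  have [t [Ht _ ->]] := L_tree uL; exact: tree_conn.
by rewrite betaK_R // !inE => /eqP -> /eqP ->; exact: connect0.
Qed.

Lemma betaK_edge a u w : u \in SK a -> w \in SK a -> EK a u w ->
  exists x y, [/\ x \in betaK a u, y \in betaK a w & e x y].
Proof.
move=> _ _; rewrite /EK => /orP[/andP[/andP[uL wR] /existsP[b /andP[/eqP Hb ebw]]]|
                             /andP[/andP[wL uR] /existsP[b /andP[/eqP Hb ebu]]]].
  exists b, w; rewrite (betaK_R wR) /betaK uL !inE Hb eqxx; split => //.
exists u, b; rewrite (betaK_R uR) /betaK wL !inE Hb eqxx se; split => //.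
Qed.

Lemma betaK_self a u : u \in SK a -> u \in betaK a u.
Proof.
rewrite inE => /orP[uL|uR]; last by rewrite betaK_R // inE.
by rewrite /betaK uL inE; move: uL; rewrite inE => /andP[/andP[_ ->]].
Qed.

Lemma betaK_disj a u w : u \in SK a -> w \in SK a -> u != w -> [disjoint betaK a u & betaK a w].
Proof.
move=> uS wS nuw; rewrite -setI_eq0; apply/eqP/setP => b; rewrite in_set0 inE.
apply/negP => /andP[bu bw].
move: uS wS; rewrite !in_setU => /orP[uL|uR] /orP[wL|wR].
- move: bu bw; rewrite /betaK uL wL !inE => /eqP H1 /eqP H2.
  by move: nuw; rewrite -H1 -H2 eqxx.
- move: bu bw; rewrite /betaK uL (negbTE (RL wR)) !inE => /eqP H1 /eqP H2.
  move: wR; rewrite inE -H2 H1; move: uL; rewrite inE => /andP[_ /eqP ->].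
  by rewrite eqxx.
- move: bu bw; rewrite /betaK wL (negbTE (RL uR)) !inE => /eqP H2 /eqP H1.
  move: uR; rewrite inE -H2 H1; move: wL; rewrite inE => /andP[_ /eqP ->].
  by rewrite eqxx.
- move: bu bw; rewrite (betaK_R uR) (betaK_R wR) !inE => /eqP H1 /eqP H2.
  by move: nuw; rewrite -H1 -H2 eqxx.
Qed.

Lemma K_minor a k : kminor (SK a) (EK a) k -> kminor setT e k.
Proof.
apply: (@lift_minor _ setT (SK a) e (EK a) (betaK a)).
- by move=> u _; apply: subsetT.
- exact: betaK_conn.
- exact: betaK_edge.
- by move=> u uS; apply/set0Pn; exists u; apply: betaK_self.
- exact: betaK_disj.
Qed.

Section Assembly.
Variable o : 'I_D -> rel T.
Hypothesis ho1 : forall a u w, o a u w -> EK a u w.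
Hypothesis ho2 : forall a u w, u \in SK a -> w \in SK a -> EK a u w -> o a u w || o a w u.
Hypothesis ho3 : forall a u, #|[set w | o a u w]| < D.

Definition Att (k : bool) a := if k then R a else L a.
Definition Ctr (k : bool) a := if k then L a else R a.
Definition idx a u c := index c (enum [set w | o a u w]).
Definition star k a i c := c |: [set u in Att k a | o a u c && (idx a u c == i)].
Definition Wst k a i c := \bigcup_(u in star k a i c) betaK a u.
Definition forest k a i := [seq mkT e (Wst k a i c) c | c <- enum (Ctr k a)].
Definition trip := [seq (k, ai) | k <- [:: false; true],
   ai <- [seq (a, i) | a <- enum 'I_D, i <- iota 0 D]].
Definition FF := F :: [seq forest p.1 p.2.1 p.2.2 | p <- trip].

Lemma AttS k a u : u \in Att k a -> u \in SK a.
Proof. by rewrite /Att /SK in_setU; case: k => ->; rewrite ?orbT. Qed.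

Lemma CtrS k a u : u \in Ctr k a -> u \in SK a.
Proof. by rewrite /Ctr /SK in_setU; case: k => ->; rewrite ?orbT. Qed.

Lemma Att_Ctr k a u : u \in Att k a -> u \notin Ctr k a.
Proof. by rewrite /Att /Ctr; case: k; [apply: RL | apply: LR]. Qed.

Lemma starS k a i c : c \in Ctr k a -> star k a i c \subset SK a.
Proof.
move=> cC; apply/subsetP => u /setU1P[->|]; first exact: CtrS cC.
by rewrite inE => /andP[uA _]; exact: AttS uA.
Qed.

Lemma star_conn k a i c : c \in Ctr k a -> forall u w, u \in star k a i c ->
  w \in star k a i c -> connect (induced (EK a) (star k a i c)) u w.
Proof.
move=> cC.
have cs : c \in star k a i c by rewrite !inE eqxx.
have Hc : forall u, u \in star k a i c -> connect (induced (EK a) (star k a i c)) u c.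
  move=> u us; move: (us); rewrite !inE => /orP[/eqP ->|/andP[_ /andP[Ho _]]].
    exact: connect0.
  by apply: connect1; rewrite /induced /= (ho1 Ho) us cs.
move=> u w us ws; apply: connect_trans (Hc _ us) _.
by rewrite (sym_connect_sym (induced_sym _ (@EK_sym a))); apply: Hc.
Qed.

Lemma Wst_conn k a i c : c \in Ctr k a -> forall x y, x \in Wst k a i c ->
  y \in Wst k a i c -> connect (induced e (Wst k a i c)) x y.
Proof.
move=> cC; apply: (@conn_union _ (SK a) e (EK a) (betaK a)).
- exact: betaK_conn.
- exact: betaK_edge.
- exact: starS cC.
- exact: star_conn cC.
Qed.

Lemma c_in_Wst k a i c : c \in Ctr k a -> c \in Wst k a i c.
Proof.
move=> cC; apply/bigcupP; exists c; first by rewrite !inE eqxx.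
exact: betaK_self (CtrS cC).
Qed.

Lemma tree_bfs k a i c : c \in Ctr k a -> is_bfs_tree e (mkT e (Wst k a i c) c).
Proof.
move=> cC; apply: mkT_bfs; first exact: se.
  exact: c_in_Wst.
exact: Wst_conn.
Qed.

Lemma star_unique k a i c c' u : c \in Ctr k a -> c' \in Ctr k a ->
  u \in star k a i c -> u \in star k a i c' -> c = c'.
Proof.
move=> cC c'C; rewrite !inE => /orP[/eqP Hu|/andP[uA /andP[Ho /eqP Hi]]]
  /orP[/eqP Hu'|/andP[uA' /andP[Ho' /eqP Hi']]].
- by rewrite -Hu -Hu'.
- by move: (Att_Ctr uA'); rewrite Hu cC.
- by move: (Att_Ctr uA); rewrite Hu' c'C.
- have m1 : c \in enum [set w | o a u w] by rewrite mem_enum inE.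
  have m2 : c' \in enum [set w | o a u w] by rewrite mem_enum inE.
  rewrite -(nth_index c m1) -(nth_index c m2).
  by move: Hi Hi'; rewrite /idx => -> ->.
Qed.

Lemma Wst_disj k a i c c' : c \in Ctr k a -> c' \in Ctr k a -> c != c' ->
  [disjoint Wst k a i c & Wst k a i c'].
Proof.
move=> cC c'C ncc; rewrite -setI_eq0; apply/eqP/setP => x; rewrite in_set0 inE.
apply/negP => /andP[/bigcupP[u us xu] /bigcupP[u' us' xu']].
case: (eqVneq u u') => [Hu|nuu].
  by move: ncc; rewrite (star_unique cC c'C us) ?eqxx // Hu.
have := betaK_disj (subsetP (starS i cC) _ us) (subsetP (starS i c'C) _ us') nuu.
by rewrite -setI_eq0 => /eqP/setP/(_ x); rewrite inE xu xu' in_set0.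
Qed.

Lemma forest_bfs k a i : is_bfs_forest e (forest k a i).
Proof.
split.
  move=> t /In_map[c [Hc ->]]; apply: tree_bfs.
  by rewrite -mem_enum; apply: In_mem.
rewrite /forest pairwise_map; apply: pairwise_uniqP; first exact: enum_uniq.
move=> c c'; rewrite !mem_enum => cC c'C ncc /=.
exact: Wst_disj.
Qed.

Lemma FF_bfs F' : List.In F' FF -> is_bfs_forest e F'.
Proof.
case=> [<-//|/In_map[p [_ ->]]]; exact: forest_bfs.
Qed.

Lemma FF_size : size FF = 1 + 2 * (D * D).
Proof. by rewrite /= size_map /trip size_allpairs size_allpairs size_enum_ord size_iota. Qed.

Lemma forest_in k a i : i < D -> List.In (forest k a i) FF.
Proof.
move=> iD; right; apply/In_map; exists (k, (a, i)); split => //.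
apply: mem_In; apply: allpairs_f; first by case: k.
by apply: allpairs_f; rewrite ?mem_enum ?mem_iota.
Qed.

Lemma tree_in k a i c : i < D -> c \in Ctr k a ->
  List.In (mkT e (Wst k a i c) c) (flatten FF).
Proof.
move=> iD cC; apply/In_flatten; exists (forest k a i); split; first exact: forest_in.
by apply/In_map; exists c; split => //; apply: mem_In; rewrite mem_enum.
Qed.

Lemma betaK_Wst k a i c u : c \in Ctr k a -> u \in star k a i c ->
  betaK a u \subset Wst k a i c.
Proof. by move=> _ us; apply/subsetP => x xu; apply/bigcupP; exists u. Qed.

Lemma cover_p t p : List.In t F -> gpath e p -> preserves t (Defs.prefix p) ->
  preserved_by (flatten FF) p.
Proof.
move=> Ht; case: p => [//|x q] /= /andP[Hp _] /andP[Hall Hroot].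
case/lastP: q Hp Hall Hroot => [|q' v] Hp; first by [].
rewrite belast_rcons => Hall Hroot.
move: Hp; rewrite rcons_path => /andP[_ Euv].
set u := last x q' in Euv.
have uT : u \in tV t by apply: (allP Hall); apply: mem_last.
have rp : troot t \in x :: rcons q' v by rewrite -rcons_cons mem_rcons inE Hroot orbT.
have pall : forall W : {set T}, tV t \subset W -> v \in W -> all (fun y => y \in W) (x :: rcons q' v).
  move=> W sW vW; rewrite -rcons_cons all_rcons vW andTb.
  by apply/allP => y /(allP Hall) yt; apply: subsetP sW _ yt.
case vt : (v \in tV t).
  exists t; split; first by apply/In_cat; left.
  by rewrite /preserves rp andbT; apply: pall.
set rho := troot t.
set a := colH rho.
have Hun : un rho = rho by rewrite (un_tree Ht (root_in Ht)).
have rL : rho \in L a.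
  by rewrite inE /isRoot Hun eqxx (In_has Ht (root_in Ht)) /a eqxx.
have nuv : un v != rho.
  apply/negP => /eqP H; move: vt; rewrite -(bset_tree Ht) inE H eqxx.
  by [].
have vR : v \in R a.
  rewrite inE /a; apply: colH_ok.
  - by apply/imsetP; exists v.
  - by apply/imsetP; exists rho.
  rewrite /EH nuv /=; apply/existsP; exists v; apply/existsP; exists u.
  by rewrite eqxx (un_tree Ht uT) eqxx se Euv.
have Erv : EK a rho v.
  by rewrite /EK rL vR /=; apply/orP; left; apply/existsP; exists u; rewrite (un_tree Ht uT) eqxx Euv.
have rS : rho \in SK a by rewrite in_setU rL.
have vS : v \in SK a by rewrite in_setU vR orbT.
have bR : betaK a rho = tV t.
  have [t' [Ht' Hr ->]] := L_tree rL.
  by move: Hr; rewrite /rho => Hr; rewrite (inF_eq Ht Ht' (root_in Ht)) // Hr root_in.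
case/orP: (ho2 rS vS Erv) => Ho.
- set i := idx a rho v.
  have iD : i < D.
    apply: leq_trans (ho3 a rho); rewrite /i /idx cardE ltnS; apply: ltnW.
    by rewrite index_mem mem_enum inE.
  have cC : v \in Ctr false a by [].
  exists (mkT e (Wst false a i v) v); split; first exact: tree_in.
  have rs : rho \in star false a i v.
    by apply/setU1P; right; apply/setIdP; split; [exact: rL | rewrite Ho eqxx].
  rewrite /preserves; apply/andP; split; last by rewrite -rcons_cons mem_rcons inE eqxx.
  apply: pall; first by rewrite -bR; apply: betaK_Wst rs.
  exact: c_in_Wst.
- set i := idx a v rho.
  have iD : i < D.
    apply: leq_trans (ho3 a v); rewrite /i /idx cardE ltnS; apply: ltnW.
    by rewrite index_mem mem_enum inE.
  have cC : rho \in Ctr true a by [].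
  exists (mkT e (Wst true a i rho) rho); split; first exact: tree_in.
  have vs : v \in star true a i rho.
    by apply/setU1P; right; apply/setIdP; split; [exact: vR | rewrite Ho eqxx].
  rewrite /preserves; apply/andP; split; last exact: rp.
  apply: pall; first by rewrite -bR; apply: betaK_Wst; rewrite ?setU11.
  by apply: (subsetP (betaK_Wst cC vs)); rewrite betaK_R // inE.
Qed.

End Assembly.

End K.

End Units.


Unset Implicit Arguments.

Theorem lemma2p2 :
  forall r : nat, exists c : nat,
    forall (T : finType) (e : rel T),
      symmetric e -> irreflexive e -> ~ has_K_minor e r ->
      forall F : seq (rtree T), is_bfs_forest e F ->
        exists FF : seq (seq (rtree T)),
          root_expansion_forest e F FF /\ size FF <= c.
Proof.
move=> r; exists (1 + 2 * (2 ^ r * 2 ^ r)) => T e se ie nK F HF.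
case: r nK => [|r'] nK.
  by exfalso; apply: nK; exists (fun _ => set0); split; case.
set D := 2 ^ r'.+1.
have HD : 0 < D by rewrite expn_gt0.
have nKH : ~ kminor (SH F) (EH e F) r'.+1.
  by move=> /(@H_minor _ _ _ HF) /kminor_has.
have okH : degOK (SH F) (EH e F) D := mader_deg (@EH_sym _ _ se F) (@EH_irr _ e F) nKH.
have [oH [colH [_ _ _ colH_ok]]] := degen HD (@EH_sym _ _ se F) (@EH_irr _ e F) okH.
have oK : forall a : 'I_D, {o : rel T & {col : T -> 'I_D |
    orient_col (SK F colH a) (EK e F colH a) o col}}.
  move=> a; apply: (@degen T D HD (SK F colH a) (EK e F colH a)).
  - exact: EK_sym.
  - exact: EK_irr.
  apply: (@mader_deg T r' (SK F colH a) (EK e F colH a)).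
  - exact: EK_sym.
  - exact: EK_irr.
  by move=> /(@K_minor _ _ se _ HF) /kminor_has.
pose o a := projT1 (oK a).
have Ho : forall a, orient_col (SK F colH a) (EK e F colH a) (o a) (proj1_sig (projT2 (oK a))).
  by move=> a; exact: proj2_sig (projT2 (oK a)).
have ho1 : forall a u w, o a u w -> EK e F colH a u w.
  by move=> a u w H; case: (Ho a) => H1 _ _ _; case/and3P: (H1 _ _ H).
have ho2 : forall a u w, u \in SK F colH a -> w \in SK F colH a ->
    EK e F colH a u w -> o a u w || o a w u.
  by move=> a; case: (Ho a).
have ho3 : forall a u, #|[set w | o a u w]| < D.
  by move=> a; case: (Ho a).
exists (FF e F colH o); split; last by rewrite FF_size.
split.
  exact: (@FF_bfs T e se F HF D colH o ho1).
move=> t Ht; split.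
  move=> t' /In_flatten[F' [HF' Ht']].
  by case: (@FF_bfs T e se F HF D colH o ho1 _ HF') => H _; apply: H.
move=> p Hp Hpre; exact: (@cover_p T e se F HF D colH colH_ok o ho2 ho3 t p Ht Hp Hpre).
Qed.
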